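(* Let $q\ge 2$, $n\ge 1$ and $h\in F(n,q)$. Then $\kappa^{\min}(h)\le \mathrm{pw}(\mathrm{IG}^*(h))$.
   Context: Let $q\ge 2$, $A=\{0,1,\dots,q-1\}$, $[n]=\{1,\dots,n\}$, and let $F(n,q)$ be the set of all maps $A^n\to A^n$. For $f\in F(m,q)$ and $i\in[m]$, $f_i$ is the $i$-th coordinate function and $f^i(x)=(x_1,\dots,x_{i-1},f_i(x),x_{i+1},\dots,x_m)$; for a word $w=(w_1,\dots,w_t)$ over $[m]$, $f^w=f^{w_t}\circ\cdots\circ f^{w_1}$. $\Pi([m])$ is the set of permutations of $[m]$ written as words $(w_1,\dots,w_m)$. $\mathrm{pr}_{[n]}:A^m\to A^n$ is the projection onto the first $n$ coordinates. For $m\ge n$, $(f,w)$ with $f\in F(m,q)$, $w\in\Pi([m])$ sequentializes $h\in F(n,q)$ if $\mathrm{pr}_{[n]}\circ f^w=h\circ\mathrm{pr}_{[n]}$. $\kappa^{\min}(h)$ is the smallest $k\ge 0$ such that there exist $f\in F(n+k,q)$ and $w\in\Pi([n+k])$ with $(f,w)$ sequentializing $h$. The interaction graph $\mathrm{IG}(h)$ is the directed graph on $[n]$ with an arc $(i,j)$ iff there exist $x,y\in A^n$ with $x_\ell=y_\ell$ for all $\ell\ne i$ and $h_j(x)\ne h_j(y)$; $\mathrm{IG}^*(h)$ is its undirected version ($\{i,j\}$ is an edge, possibly a loop, iff $(i,j)$ or $(j,i)$ is an arc). A path decomposition of an undirected graph $G=(V,E)$ is a sequence $X_1,\dots,X_p$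 of subsets of $V$ such that every vertex lies in some $X_a$, every edge has both endpoints in some common $X_a$, and if $v\in X_a\cap X_b$ with $a<b$ then $v\in X_c$ for all $c\in[a,b]$. Its size is $\max_a|X_a|-1$, and the pathwidth $\mathrm{pw}(G)$ is the minimum size of a path decomposition of $G$. *)

(* Defs.v *)
From mathcomp Require Import all_boot.
Set Implicit Arguments. Unset Strict Implicit. Unset Printing Implicit Defensive.

(* A = {0,...,q-1} is 'I_q; coordinates [m] are indexed by 'I_m (0-based). *)
Definition vec (m q : nat) := {ffun 'I_m -> 'I_q}.

Definition upd (m q : nat) (f : vec m q -> vec m q) (i : 'I_m) (x : vec m q)
  : vec m q := [ffun j => if j == i then f x i else x j].

(* f^w = f^{w_t} o ... o f^{w_1} : apply w_1 first. *)
Definition fword (m q : nat) (f : vec m q -> vec m q) (w : seq 'I_m)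
  (x : vec m q) : vec m q := foldl (fun y i => upd f i y) x w.

Definition is_perm_word (m : nat) (w : seq 'I_m) : bool := perm_eq w (enum 'I_m).

Definition proj (n k q : nat) (x : vec (n + k) q) : vec n q :=
  [ffun i => x (lshift k i)].

Definition sequentializes (n k q : nat) (h : vec n q -> vec n q)
  (f : vec (n + k) q -> vec (n + k) q) (w : seq 'I_(n + k)) : Prop :=
  is_perm_word w /\ forall x, proj (fword f w x) = h (proj x).

Definition sequentializable_with (n q : nat) (h : vec n q -> vec n q) (k : nat) : Prop :=
  exists (f : vec (n + k) q -> vec (n + k) q) (w : seq 'I_(n + k)),
    sequentializes h f w.

Definition kappa_min_le (n q : nat) (h : vec n q -> vec n q) (b : nat) : Prop :=
  exists k, k <= b /\ sequentializable_with h k.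

Definition IG_arc (n q : nat) (h : vec n q -> vec n q) (i j : 'I_n) : Prop :=
  exists x y : vec n q, (forall l, l != i -> x l = y l) /\ h x j != h y j.

(* undirected version IG*(h) (loops allowed) *)
Definition IGstar (n q : nat) (h : vec n q -> vec n q) (i j : 'I_n) : Prop :=
  IG_arc h i j \/ IG_arc h j i.

Definition path_decomposition (n : nat) (E : 'I_n -> 'I_n -> Prop)
  (X : seq {set 'I_n}) : Prop :=
  [/\ (forall v : 'I_n, exists2 B, B \in X & v \in B),
      (forall u v : 'I_n, E u v -> exists2 B, B \in X & (u \in B) && (v \in B)) &
      (forall (v : 'I_n) (a b c : nat), a <= c -> c <= b -> b < size X ->
          v \in nth set0 X a -> v \in nth set0 X b -> v \in nth set0 X c)].

Definition pd_size (n : nat) (X : seq {set 'I_n}) : nat :=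
  (\max_(B <- X) #|B|) - 1.

Definition is_pathwidth (n : nat) (E : 'I_n -> 'I_n -> Prop) (p : nat) : Prop :=
  (exists X, path_decomposition E X /\ pd_size X = p) /\
  (forall X, path_decomposition E X -> p <= pd_size X).

(* Main.v *)
Require Import Defs.
From mathcomp Require Import all_boot zify.
Set Implicit Arguments. Unset Strict Implicit. Unset Printing Implicit Defensive.

Definition arcb (n q : nat) (h : vec n q -> vec n q) (i j : 'I_n) : bool :=
  [exists x : vec n q, [exists y : vec n q,
     [forall l, (l != i) ==> (x l == y l)] && (h x j != h y j)]].

Lemma arcbP (n q : nat) (h : vec n q -> vec n q) (i j : 'I_n) :
  reflect (IG_arc h i j) (arcb h i j).
Proof.
apply: (iffP idP).
- case/existsP=> x /existsP[y /andP[/forallP H1 H2]].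
  exists x, y; split=> // l Hl; exact/eqP/(implyP (H1 l)).
- case=> x [y [H1 H2]]; apply/existsP; exists x; apply/existsP; exists y.
  rewrite H2 andbT; apply/forallP=> l; apply/implyP=> Hl; exact/eqP/H1.
Qed.

Lemma dep (n q : nat) (h : vec n q -> vec n q) (u : 'I_n) (x y : vec n q) :
  (forall w, arcb h w u -> x w = y w) -> h x u = h y u.
Proof.
have: forall d (x : vec n q), #|[set l | x l != y l]| <= d ->
    (forall w, arcb h w u -> x w = y w) -> h x u = h y u.
  elim=> [|d IH] x0 Hd Hw.
    have -> : x0 = y => //.
    apply/ffunP=> l; apply/eqP; apply: contraT=> Hne.
    have : l \in [set l | x0 l != y l] by rewrite inE.
    by move: Hd; rewrite leqn0 cards_eq0 => /eqP ->; rewrite inE.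
  case: (set_0Vmem [set l | x0 l != y l]) => [E|[l Hl]].
    have -> : x0 = y => //.
    apply/ffunP=> l; apply/eqP; apply: contraT=> Hne.
    have : l \in [set l | x0 l != y l] by rewrite inE.
    by rewrite E inE.
  pose x1 : vec n q := [ffun j => if j == l then y l else x0 j].
  have Hnarc : ~~ arcb h l u.
    apply/negP=> /Hw Hxy; move: Hl; by rewrite inE Hxy eqxx.
  have -> : h x0 u = h x1 u.
    apply/eqP; apply: contraNT Hnarc => Hne.
    apply/existsP; exists x0; apply/existsP; exists x1; rewrite Hne andbT.
    apply/forallP=> l'; apply/implyP=> Hl'; by rewrite ffunE (negbTE Hl').
  apply: (IH x1).
    have Hsub : [set l0 | x1 l0 != y l0] \subset [set l | x0 l != y l] :\ l.
      apply/subsetP=> l0; rewrite !inE ffunE.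
      by case: (l0 =P l) => [->|_]; rewrite ?eqxx.
    move: Hd; rewrite (cardsD1 l) Hl add1n ltnS; apply: leq_trans.
    exact: subset_leq_card.
  move=> w Hwu; rewrite ffunE; case: (w =P l) => [->|_] //.
  exact: Hw.
by move=> H Hw; apply: (H _ x (leqnn _)).
Qed.

Lemma fresh_color (T : finType) (Z : {set T}) (col : T -> nat) (p : nat) :
  #|Z| < p -> exists2 c, c < p & forall u, u \in Z -> col u != c.
Proof.
move=> HZ.
pose s := [seq col u | u <- enum Z].
case Hall: (all (fun c => c \in s) (iota 0 p)).
  have : size (iota 0 p) <= size s.
    apply: uniq_leq_size; first exact: iota_uniq.
    by move=> c Hc; move/allP: Hall; apply.
  by rewrite size_iota size_map -cardE leqNgt HZ.
case/allPn: Hall => c; rewrite mem_iota add0n => /andP[_ Hc] Hns.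
exists c => // u Hu; apply: contraNneq Hns => <-.
by apply: map_f; rewrite mem_enum.
Qed.

Lemma coloring (T : finType) (K : T -> nat) (A : T -> {set T}) (p : nat) :
  (forall v u, u \in A v -> u != v -> K v < K u) ->
  (forall v, v \in A v -> #|A v| <= p) ->
  exists col : T -> nat, forall v, v \in A v ->
    col v < p /\ forall u, u \in A v -> u != v -> col u != col v.
Proof.
move=> H1 H2.
suff : forall m (S : {set T}), #|S| <= m -> exists col : T -> nat, forall v, v \in S -> v \in A v ->
    col v < p /\ forall u, u \in S -> u \in A v -> u != v -> col u != col v.
  case/(_ _ [set: T] (leqnn _))=> col Hc; exists col => v Hv.
  have [Hp Hu] := Hc v (in_setT v) Hv; split=> // u Hu1 Hu2; exact: Hu (in_setT u) Hu1 Hu2.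
elim=> [|m IH] S HS.
  exists (fun _ => 0) => v Hv; move: HS; rewrite leqn0 cards_eq0 => /eqP HS.
  by move: Hv; rewrite HS inE.
case: (set_0Vmem S) => [->|[v1 Hv1]].
  by exists (fun _ => 0) => v; rewrite inE.
pose v0 := [arg min_(v < v1 in S) K v].
have Hv0S : v0 \in S by rewrite /v0; case: arg_minnP.
have Hv0min : forall v, v \in S -> K v0 <= K v by rewrite /v0; case: arg_minnP.
have [col Hcol] : exists col : T -> nat, forall v, v \in S :\ v0 -> v \in A v ->
    col v < p /\ forall u, u \in S :\ v0 -> u \in A v -> u != v -> col u != col v.
  apply: IH; move: HS; rewrite (cardsD1 v0) Hv0S add1n ltnS; exact.
have [c0 Hc0] : exists c0, v0 \in A v0 -> c0 < p /\ forall u, u \in A v0 -> u != v0 -> col u != c0.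
  case Ha: (v0 \in A v0); last by exists 0.
  have Hcard : #|A v0 :\ v0| < p by move: (H2 v0 Ha); rewrite (cardsD1 v0) Ha add1n.
  have [c Hc Hcu] := fresh_color col Hcard.
  exists c => _; split=> // u Hu Hne; apply: Hcu; by rewrite !inE Hne.
exists (fun x => if x == v0 then c0 else col x) => v Hv Hav.
case: (v =P v0) => [Ev|Nv].
  subst v; have [Hp Hu] := Hc0 Hav; split=> // u Hu1 Hu2 Hu3.
  by rewrite (negbTE Hu3); apply: Hu.
have HvS : v \in S :\ v0 by rewrite !inE Hv andbT; apply/eqP.
have [Hp Hu] := Hcol v HvS Hav; split=> // u Hu1 Hu2 Hu3.
case: (u =P v0) => [Eu|Nu].
  subst u; have := H1 v v0 Hu2 Hu3; have := Hv0min v Hv; lia.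
have HuS : u \in S :\ v0 by rewrite !inE Hu1 andbT; apply/eqP.
by apply: Hu.
Qed.

Definition early (n q : nat) (h : vec n q -> vec n q) (K : 'I_n -> nat) (v u : 'I_n) : bool :=
  [exists w, (w != u) && arcb h w u && (K w < K v)].

Definition encE (Q n p : nat) (h : vec n Q.+1 -> vec n Q.+1) (K : 'I_n -> nat)
  (col : 'I_n -> nat) (x : vec n Q.+1) (c : 'I_p) : 'I_Q.+1 :=
  inord ((\sum_(u | early h K u u && (col u == c)) (h x u : nat)) %% Q.+1).

Definition getE (n p q : nat) (y : vec (n + p) q) (j : nat) : nat :=
  odflt 0 (omap (fun i => nat_of_ord (y i)) (insub (n + j) : option 'I_(n + p))).

Definition Ssum (Q n p : nat) (h : vec n Q.+1 -> vec n Q.+1) (K : 'I_n -> nat)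
  (col : 'I_n -> nat) (y : vec (n + p) Q.+1) (v : 'I_n) : nat :=
  \sum_(u | early h K u u && (col u == col v) && (u != v))
     (if K u < K v then (y (lshift p u) : nat) else (h (proj y) u : nat)).

Definition fo (Q n p : nat) (h : vec n Q.+1 -> vec n Q.+1) (K : 'I_n -> nat)
  (col : 'I_n -> nat) (y : vec (n + p) Q.+1) (v : 'I_n) : 'I_Q.+1 :=
  if early h K v v then
    inord ((getE y (col v) + (Q.+1 - Ssum h K col y v %% Q.+1)) %% Q.+1)
  else h (proj y) v.

Definition fS (Q n p : nat) (h : vec n Q.+1 -> vec n Q.+1) (K : 'I_n -> nat)
  (col : 'I_n -> nat) (y : vec (n + p) Q.+1) : vec (n + p) Q.+1 :=
  [ffun i => match split i with
             | inl v => fo h K col y v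
             | inr c => encE h K col (proj y) c end].

Definition St (Q n p : nat) (h : vec n Q.+1 -> vec n Q.+1) (K : 'I_n -> nat)
  (col : 'I_n -> nat) (W : {set 'I_n}) (x0 : vec n Q.+1) : vec (n + p) Q.+1 :=
  [ffun i => match split i with
             | inl v => if v \in W then h x0 v else x0 v
             | inr c => encE h K col x0 c end].

Lemma split_l (n p : nat) (j : 'I_n) : split (lshift p j) = inl j.
Proof. exact: (unsplitK (inl _ j)). Qed.
Lemma split_r (n p : nat) (j : 'I_p) : split (rshift n j) = inr j.
Proof. exact: (unsplitK (inr _ j)). Qed.

Lemma getE_r (n p q : nat) (y : vec (n + p) q) (c : 'I_p) :
  getE y c = y (rshift n c).
Proof. by rewrite /getE (valK (rshift n c)). Qed.

Lemma mod_arith (Q a S : nat) : a < Q.+1 ->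
  ((a + S) %% Q.+1 + (Q.+1 - S %% Q.+1)) %% Q.+1 = a.
Proof.
move=> Ha; rewrite modnDml.
have HS : S %% Q.+1 < Q.+1 by apply: ltn_pmod.
have E := divn_eq S Q.+1.
have -> : a + S + (Q.+1 - S %% Q.+1) = (S %/ Q.+1).+1 * Q.+1 + a.
  rewrite mulSn; move: E HS; set d := S %/ Q.+1 * Q.+1; lia.
by rewrite modnMDl modn_small.
Qed.

Lemma proj_St (Q n p : nat) (h : vec n Q.+1 -> vec n Q.+1) (K : 'I_n -> nat)
  (col : 'I_n -> nat) (W : {set 'I_n}) (x0 : vec n Q.+1) :
  proj (St p h K col W x0) = [ffun u => if u \in W then h x0 u else x0 u].
Proof. by apply/ffunP=> u; rewrite !ffunE split_l. Qed.

Lemma fo_St (Q n p : nat) (h : vec n Q.+1 -> vec n Q.+1) (K : 'I_n -> nat)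
  (col : 'I_n -> nat) (W : {set 'I_n}) (x0 : vec n Q.+1) (v : 'I_n) :
  (forall v, early h K v v -> col v < p) ->
  (forall v u, early h K v v -> u != v -> col u = col v ->
      (K u < K v) || ~~ early h K v u) ->
  (forall u, (u \in W) = (K u < K v)) ->
  fo h K col (St p h K col W x0) v = h x0 v.
Proof.
move=> Hcol Hprop HW.
rewrite /fo proj_St; case Hev: (early h K v v).
- have Hc := Hcol v Hev.
  rewrite (getE_r _ (Ordinal Hc)) ffunE split_r /encE.
  rewrite inordK; last exact: ltn_pmod.
  have -> : Ssum h K col (St p h K col W x0) v =
      \sum_(u | early h K u u && (col u == col v) && (u != v)) (h x0 u : nat).
    apply: eq_bigr => u /andP[/andP[Hu Hcu] Hne].
    case: ifP => Hlt.
      by rewrite ffunE split_l HW Hlt.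
    rewrite proj_St; congr nat_of_ord; apply: dep => w Hw.
    rewrite ffunE HW.
    case: (w =P u) => [->|/eqP Hwu]; first by rewrite Hlt.
    have := Hprop v u Hev Hne (eqP Hcu); rewrite Hlt /= => Hne'.
    case: ifP => // Hlt2; exfalso; move/negP: Hne'; apply.
    by apply/existsP; exists w; rewrite Hwu Hw Hlt2.
  rewrite (bigD1 v) /=; last by rewrite Hev eqxx.
  apply: val_inj => /=; rewrite inordK; last exact: ltn_pmod.
  exact: mod_arith.
- apply: dep => w Hw; rewrite ffunE HW.
  case: (w =P v) => [->|/eqP Hwv]; first by rewrite ltnn.
  case: ifP => // Hlt.
  have : early h K v v by apply/existsP; exists w; rewrite Hwv Hw Hlt.
  by rewrite Hev.
Qed.

Lemma step_St (Q n p : nat) (h : vec n Q.+1 -> vec n Q.+1) (K : 'I_n -> nat)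
  (col : 'I_n -> nat) (W : {set 'I_n}) (x0 : vec n Q.+1) (v : 'I_n) :
  (forall v, early h K v v -> col v < p) ->
  (forall v u, early h K v v -> u != v -> col u = col v ->
      (K u < K v) || ~~ early h K v u) ->
  (forall u, (u \in W) = (K u < K v)) ->
  upd (fS h K col) (lshift p v) (St p h K col W x0) = St p h K col (v |: W) x0.
Proof.
move=> Hcol Hprop HW; apply/ffunP=> i; rewrite -[i]splitK.
case: (split i) => [j|c] /=.
- rewrite !ffunE (inj_eq (@lshift_inj _ _)) !split_l in_setU1.
  case: (j =P v) => [->|_] //=.
  rewrite ?ffunE ?split_l; exact: fo_St.
- by rewrite !ffunE eq_rlshift !split_r.
Qed.

Lemma fold_extras (Q n p : nat) (h : vec n Q.+1 -> vec n Q.+1) (K : 'I_n -> nat)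
  (col : 'I_n -> nat) (s : seq 'I_p) (y : vec (n + p) Q.+1) :
  foldl (fun y i => upd (fS h K col) i y) y (map (@rshift n p) s) =
  [ffun i => match split i with
             | inl _ => y i
             | inr c => if c \in s then encE h K col (proj y) c else y i end].
Proof.
elim: s y => [|c s IH] y /=.
  by apply/ffunP=> i; rewrite ffunE; case: (split i).
rewrite IH; apply/ffunP=> i; rewrite !ffunE.
have Hp : proj (upd (fS h K col) (@rshift n p c) y) = proj y.
  by apply/ffunP=> u; rewrite /upd !ffunE eq_lrshift.
rewrite -[i]splitK; case: (split i) => [j|c'] /=; rewrite ?split_l ?split_r.
  by rewrite /upd ?ffunE eq_lrshift.
rewrite Hp in_cons; case: ifP => _; first by rewrite orbT.
rewrite orbF /upd ?ffunE (inj_eq (@rshift_inj _ _)).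
by case: (c' =P c) => [->|_] //; rewrite ffunE split_r.
Qed.

Lemma fold_orig (Q n p : nat) (h : vec n Q.+1 -> vec n Q.+1) (K : 'I_n -> nat)
  (col : 'I_n -> nat) (x0 : vec n Q.+1) :
  (forall v, early h K v v -> col v < p) ->
  (forall v u, early h K v v -> u != v -> col u = col v ->
      (K u < K v) || ~~ early h K v u) ->
  forall (s : seq 'I_n) (W : {set 'I_n}),
  sorted (fun a b => K a < K b) s ->
  (forall u v, u \in W -> v \in s -> K u < K v) ->
  (forall u, (u \in W) || (u \in s)) ->
  foldl (fun y i => upd (fS h K col) i y) (St p h K col W x0) (map (lshift p) s)
    = St p h K col setT x0.
Proof.
move=> Hcol Hprop; elim=> [|v s IH] W Hs HWs Hcov /=.
  have -> : W = setT by apply/setP=> u; rewrite inE; move: (Hcov u); rewrite orbF.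
  by [].
have Hmin : all (fun b => K v < K b) s.
  by apply: (order_path_min (leT := fun a b => K a < K b)) => // a b c; apply: ltn_trans.
have HW : forall u, (u \in W) = (K u < K v).
  move=> u; apply/idP/idP => [Hu|Hlt]; first by apply: HWs; rewrite ?inE ?eqxx.
  move: (Hcov u); rewrite in_cons; case/orP=> // /orP[/eqP Eu|Hus].
    by move: Hlt; rewrite Eu ltnn.
  by move/allP: Hmin => /(_ u Hus); move: Hlt; lia.
rewrite step_St //; apply: IH.
- exact: path_sorted Hs.
- move=> u w; rewrite in_setU1 => /orP[/eqP ->|Hu] Hw.
    by move/allP: Hmin; apply.
  by apply: HWs; rewrite // in_cons Hw orbT.
- move=> u; rewrite in_setU1; move: (Hcov u); rewrite in_cons.
  by case: (u == v); case: (u \in W); case: (u \in s).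
Qed.

Lemma scheme (Q n p : nat) (h : vec n Q.+1 -> vec n Q.+1) (K : 'I_n -> nat)
  (col : 'I_n -> nat) :
  injective K ->
  (forall v, early h K v v -> col v < p) ->
  (forall v u, early h K v v -> u != v -> col u = col v ->
      (K u < K v) || ~~ early h K v u) ->
  sequentializable_with h p.
Proof.
move=> HK Hcol Hprop.
pose s0 := sort (fun a b => K a <= K b) (enum 'I_n).
have Hs0u : uniq s0 by rewrite sort_uniq enum_uniq.
have Hsorted : sorted (fun a b => K a < K b) s0.
  have Hle : sorted (fun a b => K a <= K b) s0.
    by apply: sort_sorted => a b; exact: leq_total.
  have : sorted ltn (map K s0).
    by rewrite ltn_sorted_uniq_leq (map_inj_uniq HK) Hs0u sorted_map.
  by rewrite sorted_map.
exists (fS h K col), (map (@rshift n p) (enum 'I_p) ++ map (lshift p) s0).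
split.
- apply: uniq_perm; last 2 first.
  + exact: enum_uniq.
  + move=> i; rewrite mem_enum mem_cat -[i]splitK; case: (split i) => [j|c] /=.
      by apply/orP; right; apply: map_f; rewrite mem_sort mem_enum.
    by apply/orP; left; apply: map_f; rewrite mem_enum.
  rewrite cat_uniq (map_inj_uniq (@rshift_inj _ _)) ?enum_uniq //=.
  rewrite (map_inj_uniq (@lshift_inj _ _)) // Hs0u andbT.
  apply/hasPn => i /mapP [v _ ->]; apply/mapP => [[c _ /eqP]].
  by rewrite eq_lrshift.
- move=> y; rewrite /fword foldl_cat fold_extras.
  have -> : [ffun i => match split i with
             | inl _ => y i
             | inr c => if c \in enum 'I_p then encE h K col (proj y) c else y i end]
      = St p h K col set0 (proj y).
    apply/ffunP=> i; rewrite !ffunE -[i]splitK; case: (split i) => [j|c] /=.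
      by rewrite split_l inE ffunE.
    by rewrite split_r mem_enum.
  rewrite fold_orig //.
  + by apply/ffunP=> u; rewrite proj_St !ffunE inE.
  + by move=> u v; rewrite inE.
  + by move=> u; rewrite mem_sort mem_enum orbT.
Qed.

Lemma aux (Q n p : nat) (h : vec n Q.+1 -> vec n Q.+1) (X : seq {set 'I_n}) :
  path_decomposition (IGstar h) X -> (forall B, B \in X -> #|B| <= p.+1) ->
  sequentializable_with h p.
Proof.
case=> Hcov Hedge Hconv Hbag.
pose L (v : 'I_n) := \max_(c < size X | v \in nth set0 X c) (c : nat).
have HL1 : forall v (c : 'I_(size X)), v \in nth set0 X c -> c <= L v.
  by move=> v c Hc; apply: (@leq_bigmax_cond _ (fun c : 'I_(size X) => v \in nth set0 X c) (fun c => nat_of_ord c)).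
have HL2 : forall v, L v < size X /\ v \in nth set0 X (L v).
  move=> v; have [B HB HvB] := Hcov v.
  have Hpos : 0 < #|[pred c : 'I_(size X) | v \in nth set0 X c]|.
    have Hi : index B X < size X by rewrite index_mem.
    by apply/card_gt0P; exists (Ordinal Hi); rewrite inE /= nth_index.
  have [i0 Hi0 E] := @eq_bigmax_cond _ _ (fun c => nat_of_ord c) Hpos.
  have E' : L v = i0 := E.
  by rewrite E'; split; [exact: ltn_ord | exact: Hi0].
pose K (v : 'I_n) := L v * n + v.
have HK : injective K.
  move=> a b E; apply: val_inj => /=.
  have := congr1 (modn^~ n) E; rewrite /K !modnMDl !modn_small //.
have HLK : forall a b, L a < L b -> K a < K b.
  move=> a b Hab; rewrite /K; have := ltn_ord a; have := ltn_ord b.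
  have : (L a).+1 * n <= L b * n by rewrite leq_mul2r Hab orbT.
  rewrite mulSn; lia.
have HLK1 : forall a b, K a < K b -> L a <= L b.
  by move=> a b H; rewrite leqNgt; apply/negP => /HLK; lia.
have HLK2 : forall a b, K a <= K b -> L a <= L b.
  by move=> a b H; rewrite leqNgt; apply/negP => /HLK; lia.
have Hed : forall w u, arcb h w u -> exists c : 'I_(size X),
    (w \in nth set0 X c) && (u \in nth set0 X c).
  move=> w u /arcbP Ha; have [B HB Hwu] := Hedge w u (or_introl Ha).
  have Hi : index B X < size X by rewrite index_mem.
  by exists (Ordinal Hi); rewrite /= nth_index.
pose A (v : 'I_n) := [set u | (K v <= K u) && early h K v u].
have H1 : forall v u, u \in A v -> u != v -> K v < K u.
  move=> v u; rewrite inE => /andP[Hle _] Hne; rewrite ltn_neqAle Hle andbT.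
  by apply: contra Hne => /eqP /HK ->.
have Hin : forall v u, u \in A v -> exists w, exists c : 'I_(size X),
    [/\ K w < K v, w \in nth set0 X c, u \in nth set0 X c & c <= L v] /\ u \in nth set0 X (L v).
  move=> v u; rewrite inE => /andP[Hvu /existsP[w /andP[/andP[Hwu Hw] Hwv]]].
  have [c /andP[Hwc Huc]] := Hed w u Hw.
  have Hc : c <= L v by apply: leq_trans (HL1 _ _ Hwc) (HLK1 _ _ Hwv).
  exists w, c; split => //.
  have [Hs Hu] := HL2 u.
  by apply: (Hconv u c (L u) (L v)) => //; apply: HLK2.
have H2 : forall v, #|A v| <= p.
  move=> v; rewrite leqNgt; apply/negP => Hgt.
  have [HLs HvL] := HL2 v.
  have Hsub : A v \subset nth set0 X (L v).
    by apply/subsetP=> u /Hin [w [c [_ Hu]]].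
  have Heq : A v = nth set0 X (L v).
    apply/eqP; rewrite eqEcard Hsub /=.
    by apply: leq_trans (Hbag _ (mem_nth _ HLs)) Hgt.
  pose P (c : 'I_(size X)) := (c < L v) && [exists w, (w \in nth set0 X c) && (w \notin nth set0 X (L v))].
  have Hcl : forall u, u \in A v -> exists c : 'I_(size X), P c && (u \in nth set0 X c).
    move=> u Hu; have [w [c [[Hwv Hwc Huc Hc] _]]] := Hin v u Hu.
    have Hw : w \notin nth set0 X (L v).
      apply/negP; rewrite -Heq => /H1; case: (w =P v) => [Ew|/eqP Nw].
        by move: Hwv; rewrite Ew ltnn.
      by move=> /(_ isT); lia.
    exists c; rewrite Huc andbT /P.
    have Hcl : c != L v :> nat.
      by apply/negP => /eqP Ec; move: Hw; rewrite -Ec Hwc.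
    rewrite ltn_neqAle Hcl Hc /=; apply/existsP; exists w; by rewrite Hwc Hw.
  have [u0 Hu0] : exists u0, u0 \in A v by apply/card_gt0P; lia.
  have Hpos : 0 < #|[pred c : 'I_(size X) | P c]|.
    have [c0 /andP[Hc0 _]] := Hcl u0 Hu0.
    by apply/card_gt0P; exists c0; rewrite inE.
  have [i0 Hi0 E] := @eq_bigmax_cond _ _ (fun c => nat_of_ord c) Hpos.
  move: Hi0; rewrite inE /P => /andP[Hi0L /existsP[ws /andP[Hws Hwsn]]].
  have Hsub2 : ws |: nth set0 X (L v) \subset nth set0 X i0.
    apply/subsetP=> u; rewrite in_setU1 => /orP[/eqP -> //|HuL].
    have HuA : u \in A v by rewrite Heq.
    have [c /andP[Pc Huc]] := Hcl u HuA.
    have Hci : c <= i0.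
      rewrite -E; exact: (@leq_bigmax_cond _ (fun c : 'I_(size X) => c \in [pred c | P c]) (fun c => nat_of_ord c) c).
    apply: (Hconv u c (L v) i0) => //; exact: ltnW.
  have := subset_leq_card Hsub2; rewrite cardsU1 Hwsn -Heq add1n.
  move=> Hlt; have := Hbag _ (mem_nth set0 (ltn_ord i0)) => Hb.
  by move: (leq_trans (leq_ltn_trans Hgt Hlt) Hb); rewrite ltnn.
have [col Hcol] := coloring H1 (fun v _ => H2 v).
apply: (scheme (K := K) (col := col)) => //.
- move=> v Hv; have Hav : v \in A v by rewrite inE leqnn.
  by case: (Hcol v Hav).
- move=> v u Hv Hne Hc; rewrite -implyNb; apply/implyP; rewrite -leqNgt => Hvu.
  apply/negP => Hvu2.
  have Hav : v \in A v by rewrite inE leqnn.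
  have Hau : u \in A v by rewrite inE Hvu Hvu2.
  have [_ Hd] := Hcol v Hav; by move: (Hd u Hau Hne); rewrite Hc eqxx.
Qed.

Theorem mainTheorem12 (q n : nat) (hq : 2 <= q) (hn : 1 <= n)
  (h : vec n q -> vec n q) (p : nat) :
  is_pathwidth (IGstar h) p -> kappa_min_le h p.
Proof.
case=> [[X [HX Hsz]] _]; exists p; split=> //.
have Hbag : forall B, B \in X -> #|B| <= p.+1.
  move=> B HB; have := @leq_bigmax_seq _ X (fun _ => true) (fun B : {set 'I_n} => #|B|) B HB isT.
  move: Hsz; rewrite /pd_size => <- H; apply: (leq_trans H).
  by rewrite subn1 leqSpred.
move: h HX Hbag; case: q hq => [|Q] // _ h HX Hbag.
exact: aux HX Hbag.
Qed.
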